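(* Let $q\in\mathbb{C}^*$ and let $v=(\underline t',q')=(k_0',k_1',u_0',u_1',q')\in\mathbb{C}^5$ be nonzero. Let $H'$ be the $\mathbb{C}[\epsilon]/(\epsilon^2)$-algebra $H(\underline 1+\epsilon\underline t';q+\epsilon q')$ taken modulo $\epsilon^2$. Then there is no isomorphism of $\mathbb{C}[\epsilon]/(\epsilon^2)$-algebras $H'\to H(\underline 1;q)\otimes_{\mathbb{C}}\mathbb{C}[\epsilon]/(\epsilon^2)$ which reduces to the identity of $H(\underline1;q)$ modulo $\epsilon$.
   Context: For parameters $k_0,k_1,u_0,u_1,q$ in a commutative ring in which they are invertible (with a chosen $q^{1/2}$), $H(k_0,k_1,u_0,u_1;q)$ is the algebra generated by $V_0,V_1,V_0^\vee,V_1^\vee$ with relations $(V_0-k_0)(V_0+k_0^{-1})=0$, $(V_1-k_1)(V_1+k_1^{-1})=0$, $(V_0^\vee-u_0)(V_0^\vee+u_0^{-1})=0$, $(V_1^\vee-u_1)(V_1^\vee+u_1^{-1})=0$, $V_1^\vee V_1V_0V_0^\vee=q^{-1/2}$. Here $\underline 1=(1,1,1,1)$, $\underline 1+\epsilon\underline t'=(1+\epsilon k_0',1+\epsilon k_1',1+\epsilon u_0',1+\epsilon u_1')$, and $(q+\epsilon q')^{1/2}=q^{1/2}(1+\epsilon q'/(2q))$. Note $H'/\epsilon H'=H(\underline1;q)$. *)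

(* Defs.v *)
From HB Require Import structures.
From mathcomp Require Import all_boot all_algebra.
From mathcomp Require Import reals complex.
Set Implicit Arguments. Unset Strict Implicit. Unset Printing Implicit Defensive.
Import GRing.Theory.
Local Open Scope ring_scope.

(* A C[eps]/(eps^2)-algebra is a C-algebra A
   together with a central element e (the image of eps) with e * e = 0;
   a scalar a + b eps of C[eps]/(eps^2) acts on A as  a *: x + b *: (e * x). *)

Definition central (C : fieldType) (A : algType C) (e : A) : Prop :=
  forall x : A, e * x = x * e.

Definition alg_hom (C : fieldType) (A B : algType C) (f : A -> B) : Prop :=
  [/\ forall x y, f (x + y) = f x + f y,
      forall x y, f (x * y) = f x * f y,
      f 1 = 1 &
      forall (c : C) x, f (c *: x) = c *: f x].

(* The defining relations of H(k0,k1,u0,u1;q) on elements X0 = V_0,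
   X1 = V_1, Y0 = V_0^vee, Y1 = V_1^vee, where the parameters k0, k0^{-1},
   ..., u1, u1^{-1} and q^{-1/2} are given as elements of the algebra. *)
Definition HRel (C : fieldType) (A : algType C)
    (k0 k0i k1 k1i u0 u0i u1 u1i qmh : A) (X0 X1 Y0 Y1 : A) : Prop :=
  [/\ (X0 - k0) * (X0 + k0i) = 0,
      (X1 - k1) * (X1 + k1i) = 0,
      (Y0 - u0) * (Y0 + u0i) = 0,
      (Y1 - u1) * (Y1 + u1i) = 0 &
      Y1 * X1 * X0 * Y0 = qmh].

(* Relations of H(1,1,1,1;q) over C, where s is the chosen q^{1/2}
   (so q^{-1/2} = s^-1). *)
Definition HRel1 (C : fieldType) (s : C) (A : algType C) (X0 X1 Y0 Y1 : A) :=
  HRel 1 1 1 1 1 1 1 1 (s^-1)%:A X0 X1 Y0 Y1.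

(* (H0, V0, V1, W0, W1) is (a presentation of) the C-algebra H(1;q):
   generated by V0, V1, W0 (= V_0^vee), W1 (= V_1^vee) subject only to the
   relations, i.e. it has the universal property of the presented algebra. *)
Definition presents_H1 (C : fieldType) (s : C)
    (H0 : algType C) (V0 V1 W0 W1 : H0) : Prop :=
  HRel1 s V0 V1 W0 W1 /\
  forall (B : algType C) (b0 b1 c0 c1 : B), HRel1 s b0 b1 c0 c1 ->
    (exists f : H0 -> B, alg_hom f /\
        [/\ f V0 = b0, f V1 = b1, f W0 = c0 & f W1 = c1]) /\
    (forall f g : H0 -> B, alg_hom f -> alg_hom g ->
        [/\ f V0 = b0, f V1 = b1, f W0 = c0 & f W1 = c1] ->
        [/\ g V0 = b0, g V1 = b1, g W0 = c0 & g W1 = c1] ->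
        forall x, f x = g x).

(* Element a + b eps of C[eps]/(eps^2) viewed in an algebra with eps |-> e. *)
Definition dual_el (C : fieldType) (A : algType C) (e : A) (a b : C) : A :=
  a%:A + b *: e.

(* Relations of H(1 + eps t'; q + eps q') over C[eps]/(eps^2), with
   k = 1 + eps k',  k^{-1} = 1 - eps k'  (in C[eps]/(eps^2)), and
   (q + eps q')^{1/2} = s (1 + eps q'/(2q)), whose inverse in C[eps]/(eps^2)
   is  q^{-1/2}_eps = s^{-1} - eps s^{-1} q'/(2q). *)
Definition HRelEps (C : fieldType) (q s k0' k1' u0' u1' q' : C)
    (A : algType C) (e : A) (X0 X1 Y0 Y1 : A) :=
  HRel (dual_el e 1 k0') (dual_el e 1 (- k0'))
       (dual_el e 1 k1') (dual_el e 1 (- k1'))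
       (dual_el e 1 u0') (dual_el e 1 (- u0'))
       (dual_el e 1 u1') (dual_el e 1 (- u1'))
       (dual_el e s^-1 (- (s^-1 * q' / (2%:R * q))))
       X0 X1 Y0 Y1.

(* (A, e, X0, X1, Y0, Y1) is (a presentation of) the C[eps]/(eps^2)-algebra
   H' = H(1 + eps t'; q + eps q'): universal among C[eps]/(eps^2)-algebras
   (B, eB) with elements satisfying the relations. *)
Definition presents_Heps (C : fieldType) (q s k0' k1' u0' u1' q' : C)
    (A : algType C) (e : A) (X0 X1 Y0 Y1 : A) : Prop :=
  [/\ central e, e * e = 0, HRelEps q s k0' k1' u0' u1' q' e X0 X1 Y0 Y1 &
  forall (B : algType C) (eB : B) (b0 b1 c0 c1 : B),
    central eB -> eB * eB = 0 ->
    HRelEps q s k0' k1' u0' u1' q' eB b0 b1 c0 c1 ->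
    (exists f : A -> B, alg_hom f /\ f e = eB /\
        [/\ f X0 = b0, f X1 = b1, f Y0 = c0 & f Y1 = c1]) /\
    (forall f g : A -> B, alg_hom f -> alg_hom g -> f e = eB -> g e = eB ->
        [/\ f X0 = b0, f X1 = b1, f Y0 = c0 & f Y1 = c1] ->
        [/\ g X0 = b0, g X1 = b1, g Y0 = c0 & g Y1 = c1] ->
        forall x, f x = g x)].

(* H0 (x)_C C[eps]/(eps^2) = H0 + eps H0, represented as pairs (a, b) = a + eps b,
   with its C[eps]/(eps^2)-algebra operations written out explicitly. *)
Definition dadd (C : fieldType) (H0 : algType C) (x y : H0 * H0) : H0 * H0 :=
  (x.1 + y.1, x.2 + y.2).
Definition dmul (C : fieldType) (H0 : algType C) (x y : H0 * H0) : H0 * H0 :=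
  (x.1 * y.1, x.1 * y.2 + x.2 * y.1).
Definition done_ (C : fieldType) (H0 : algType C) : H0 * H0 := (1, 0).
Definition dscale (C : fieldType) (H0 : algType C) (c : C) (x : H0 * H0) : H0 * H0 :=
  (c *: x.1, c *: x.2).
Definition deps (C : fieldType) (H0 : algType C) : H0 * H0 := (0, 1).

Definition dual_hom (C : fieldType) (A H0 : algType C) (e : A)
    (phi : A -> H0 * H0) : Prop :=
  [/\ forall x y, phi (x + y) = dadd (phi x) (phi y),
      forall x y, phi (x * y) = dmul (phi x) (phi y),
      phi 1 = done_ H0,
      forall (c : C) x, phi (c *: x) = dscale c (phi x) &
      phi e = deps H0].

(* Main.v *)
Require Import Defs.
From HB Require Import structures.
From mathcomp Require Import all_boot all_algebra.
From mathcomp Require Import reals complex.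
From mathcomp Require Import boolp ring.
Import GRing.Theory Num.Theory.
Local Open Scope ring_scope.

Section OpAlg.
Variable R : realType.
Local Notation C := R[i].
Variable lam : C.

Definition Xp := (int * int * bool)%type.
Definition Fn := Xp -> C.
Definition lamz (z : int) : C := if lam == 0 then 1 else lam ^ z.
Lemma lamD a b : lamz (a + b) = lamz a * lamz b.
Proof. by rewrite /lamz; case: eqP => [|/eqP h]; [rewrite mul1r | exact: expfzDr]. Qed.
Lemma lamz0 : lamz 0 = 1. Proof. by rewrite /lamz; case: ifP. Qed.

Definition eR (v : int * int) (y : Xp) : int := - (v.1 * v.2) - 2 * v.2 * (y.1.1 - v.1).
Definition eT (t : int * int) (y : Xp) : int := - (2 * t.2 * (y.1.1 - t.1)).
Definition pR (v : int * int) (y : Xp) : Xp := (v.1 - y.1.1, v.2 - y.1.2, ~~ y.2).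
Definition pT (t : int * int) (y : Xp) : Xp := (y.1.1 - t.1, y.1.2 - t.2, y.2).

Fixpoint ew (w : seq (int * int)) (y : Xp) : int :=
  if w is v :: w' then eR v y + ew w' (pR v y) else 0.
Fixpoint wp (w : seq (int * int)) (y : Xp) : Xp :=
  if w is v :: w' then wp w' (pR v y) else y.
Definition wop w (f : Fn) : Fn := fun y => lamz (ew w y) * f (wp w y).

Lemma wop_cat w1 w2 f y : wop (w1 ++ w2) f y = wop w1 (wop w2 f) y.
Proof.
rewrite /wop; elim: w1 y => [|v w1 IH] y /=; first by rewrite lamz0 mul1r.
by rewrite (lamD (eR v y)) (lamD (eR v y)) -!mulrA IH.
Qed.

Definition Pop (x : Fn -> Fn) : Prop :=
  exists l : seq (C * seq (int * int)),
    forall f y, x f y = \sum_(p <- l) p.1 * wop p.2 f y.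

Record Sop := MkS { sv : Fn -> Fn; sP : Pop sv }.

Lemma Sop_inj (x y : Sop) : sv x = sv y -> x = y.
Proof.
case: x => x px; case: y => y py /= exy; subst y.
by rewrite (Prop_irrelevance px py).
Qed.

Lemma Sop_ext (x y : Sop) : (forall f z, sv x f z = sv y f z) -> x = y.
Proof. by move=> h; apply: Sop_inj; apply: funext => f; apply: funext => z. Qed.

HB.instance Definition _ := gen_eqMixin Sop.
HB.instance Definition _ := gen_choiceMixin Sop.

Lemma Pop_add_lin x g h z : Pop x -> x (fun t => g t + h t) z = x g z + x h z.
Proof.
case=> l hl; rewrite !hl -big_split /=; apply: eq_bigr => p _.
by rewrite /wop; ring.
Qed.
Lemma Pop_scale_lin x a g z : Pop x -> x (fun t => a * g t) z = a * x g z.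
Proof.
case=> l hl; rewrite !hl mulr_sumr; apply: eq_bigr => p _.
by rewrite /wop; ring.
Qed.

Lemma P0 : Pop (fun f y => 0).
Proof. by exists [::] => f y; rewrite big_nil. Qed.
Lemma Popp x : Pop x -> Pop (fun f y => - x f y).
Proof.
case=> l hl; exists [seq (- p.1, p.2) | p <- l] => f y.
rewrite hl big_map -sumrN; apply: eq_bigr => p _ /=; ring.
Qed.
Lemma Padd x x' : Pop x -> Pop x' -> Pop (fun f y => x f y + x' f y).
Proof.
case=> l hl [l' hl']; exists (l ++ l') => f y.
by rewrite hl hl' big_cat.
Qed.
Lemma Pscale a x : Pop x -> Pop (fun f y => a * x f y).
Proof.
case=> l hl; exists [seq (a * p.1, p.2) | p <- l] => f y.
rewrite hl big_map mulr_sumr; apply: eq_bigr => p _ /=; ring.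
Qed.
Lemma P1 : Pop (fun f => f).
Proof. by exists [:: (1, [::])] => f y; rewrite big_seq1 /wop /= lamz0 !mul1r. Qed.
Lemma Pmul x x' : Pop x -> Pop x' -> Pop (fun f => x (x' f)).
Proof.
case=> l hl [l' hl']; exists [seq (p.1 * q.1, p.2 ++ q.2) | p <- l, q <- l'] => f y.
rewrite hl big_allpairs_dep; apply: eq_bigr => p _.
rewrite {1}/wop hl' !mulr_sumr; apply: eq_bigr => q _ /=.
rewrite wop_cat {2}/wop; ring.
Qed.

Arguments Popp {x}. Arguments Padd {x x'}. Arguments Pscale a {x}. Arguments Pmul {x x'}.
Definition szero := @MkS _ P0.
Definition sopp (x : Sop) := @MkS _ (Popp (sP x)).
Definition sadd (x y : Sop) := @MkS _ (Padd (sP x) (sP y)).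
Definition sone := @MkS _ P1.
Definition smul (x y : Sop) := @MkS _ (Pmul (sP x) (sP y)).
Definition sscale (a : C) (x : Sop) := @MkS _ (Pscale a (sP x)).

Lemma saddA : associative sadd.
Proof. by move=> x y z; apply: Sop_ext => f t /=; rewrite addrA. Qed.
Lemma saddC : commutative sadd.
Proof. by move=> x y; apply: Sop_ext => f t /=; rewrite addrC. Qed.
Lemma sadd0 : left_id szero sadd.
Proof. by move=> x; apply: Sop_ext => f t /=; rewrite add0r. Qed.
Lemma saddN : left_inverse szero sopp sadd.
Proof. by move=> x; apply: Sop_ext => f t /=; rewrite addNr. Qed.

HB.instance Definition _ := GRing.isZmodule.Build Sop saddA saddC sadd0 saddN.

Lemma smulA : associative smul.
Proof. by move=> x y z; apply: Sop_ext => f t. Qed.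
Lemma smul1 : left_id sone smul.
Proof. by move=> x; apply: Sop_ext => f t. Qed.
Lemma smulr1 : right_id sone smul.
Proof. by move=> x; apply: Sop_ext => f t. Qed.
Lemma smulDl : left_distributive smul sadd.
Proof. by move=> x y z; apply: Sop_ext => f t. Qed.
Lemma smulDr : right_distributive smul sadd.
Proof. by move=> x y z; apply: Sop_ext => f t /=; rewrite (Pop_add_lin _ _ _ _ (sP x)). Qed.
Lemma sone_neq0 : sone != szero.
Proof.
apply/eqP => h; have := congr1 (fun x => sv x (fun _ => 1) (0, 0, false)) h.
by move=> /= /eqP; rewrite oner_eq0.
Qed.

HB.instance Definition _ := GRing.Zmodule_isNzRing.Build Sop smulA smul1 smulr1 smulDl smulDr sone_neq0.

Lemma sscaleA a b v : sscale a (sscale b v) = sscale (a * b) v.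
Proof. by apply: Sop_ext => f t /=; rewrite mulrA. Qed.
Lemma sscale1 : left_id 1 sscale.
Proof. by move=> x; apply: Sop_ext => f t /=; rewrite mul1r. Qed.
Lemma sscaleDr : right_distributive sscale +%R.
Proof. by move=> a x y; apply: Sop_ext => f t /=; rewrite mulrDr. Qed.
Lemma sscaleDl v : {morph sscale^~ v: a b / a + b}.
Proof. by move=> a b; apply: Sop_ext => f t /=; rewrite mulrDl. Qed.

HB.instance Definition _ := GRing.Zmodule_isLmodule.Build C Sop sscaleA sscale1 sscaleDr sscaleDl.

Lemma sscaleAl (a : C) (u v : Sop) : a *: (u * v) = (a *: u) * v.
Proof. by apply: Sop_ext => f t. Qed.
HB.instance Definition _ := GRing.Lmodule_isLalgebra.Build C Sop sscaleAl.
Lemma sscaleAr (a : C) (u v : Sop) : a *: (u * v) = u * (a *: v).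
Proof. by apply: Sop_ext => f t /=; rewrite (Pop_scale_lin _ _ _ _ (sP u)). Qed.
HB.instance Definition _ := GRing.Lalgebra_isAlgebra.Build C Sop sscaleAr.

Definition SopA : algType C := Sop.


Lemma sig_refl (s : C) (w t : int) : s * s = 1 -> s ^ (2 * w - t) = s ^ t.
Proof.
move=> h; have s0 : s != 0 by apply/eqP => s0; move: h; rewrite s0 mul0r => /eqP; rewrite eq_sym oner_eq0.
have hh : s ^ t * s ^ t = 1 by rewrite -expfzMl h exp1rz.
rewrite expfzDr // -exprz_exp.
have -> : s ^ (2 : int) = 1 by rewrite -exprnP expr2 h.
rewrite exp1rz mul1r -invr_expz.
by rewrite -[LHS]mulr1 -hh mulKf // expfz_neq0.
Qed.

Lemma wclass w : exists c t (b : bool),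
  (forall y, wp w y = if b then pR t y else pT t y) /\
  (forall y, ew w y = c + (if b then eR t y else eT t y)).
Proof.
elim: w => [|v w [c [t [b [Hp Hw]]]]].
  exists 0, (0, 0), false; split => [[[y1 y2] s]|y] /=.
    by rewrite /pT /= !subr0.
  by rewrite /eT /=; ring.
case: b Hp Hw => Hp Hw.
  exists (c - v.1 * v.2 - t.1 * t.2 + 2 * v.2 * t.1), (v.1 - t.1, v.2 - t.2), false.
  split => [[[y1 y2] s]|y] /=.
    by rewrite Hp /pR /pT /= negbK; congr (_, _, _); ring.
  by rewrite Hw /eR /eT /pR /=; ring.
exists (c + t.1 * v.2 + t.1 * t.2 - v.1 * t.2), (v.1 - t.1, v.2 - t.2), true.
split => [[[y1 y2] s]|y] /=.
  by rewrite Hp /pR /pT /=; congr (_, _, _); ring.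
by rewrite Hw /eR /eT /pR /=; ring.
Qed.


Definition y0 : Xp := (0, 0, false).

Definition phiF (a s1 s2 : C) (y : Xp) : C :=
  if y.2 then lamz (- (y.1.1 * y.1.2)) * (s1 ^ y.1.1 * s2 ^ y.1.2)
  else if (y.1.1 == 0) && (y.1.2 == 0) then a else 0.

Lemma ew_cat w1 w2 y : ew (w1 ++ w2) y = ew w1 y + ew w2 (wp w1 y).
Proof. by elim: w1 y => [|v w1 IH] y /=; rewrite ?add0r // IH addrA. Qed.
Lemma wp_cat w1 w2 y : wp (w1 ++ w2) y = wp w2 (wp w1 y).
Proof. by elim: w1 y => [|v w1 IH] y /=. Qed.

Lemma winv a s1 s2 : s1 * s1 = 1 -> s2 * s2 = 1 -> forall v w,
  wop (v :: w ++ [:: v]) (phiF a s1 s2) y0 = wop w (phiF a s1 s2) y0.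
Proof.
move=> h1 h2 v w; rewrite /wop /= ew_cat wp_cat /= addr0.
have [c [t [b [Hp Hw]]]] := wclass w.
rewrite !Hp !Hw; case: b {Hp Hw}.
  rewrite /phiF /pR /= !subr0.
  have -> : v.1 - (t.1 - v.1) = 2 * v.1 - t.1 by ring.
  have -> : v.2 - (t.2 - v.2) = 2 * v.2 - t.2 by ring.
  rewrite !sig_refl // !mulrA -!lamD; congr (lamz _ * _ * _).
  rewrite /eR /=; ring.
rewrite /phiF /pR /pT /= !subr0.
have -> : v.1 - (v.1 - t.1) = t.1 by ring.
have -> : v.2 - (v.2 - t.2) = t.2 by ring.
rewrite !sub0r !oppr_eq0.
case: ifP => [/andP [/eqP e1 /eqP e2]|]; last by rewrite !mulr0.
congr (lamz _ * _).
rewrite /eR /eT /= e1 e2; ring.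
Qed.

Lemma Pgen v : Pop (wop [:: v]).
Proof. by exists [:: (1, [:: v])] => f y; rewrite big_seq1 mul1r. Qed.
Definition gen v : Sop := @MkS _ (Pgen v).

Definition tau a s1 s2 (x : Sop) : C := sv x (phiF a s1 s2) y0.

Lemma tau_inv a s1 s2 : s1 * s1 = 1 -> s2 * s2 = 1 -> forall v (x : Sop),
  tau a s1 s2 (gen v * x * gen v) = tau a s1 s2 x.
Proof.
move=> h1 h2 v x; rewrite /tau /=.
case: (sP x) => l hl.
rewrite /wop /= hl [in RHS]hl mulr_sumr; apply: eq_bigr => p _.
have := winv a s1 s2 h1 h2 v p.2; rewrite /wop /= ew_cat wp_cat /= addr0 => <-.
rewrite !addr0 (lamD (eR v y0)) (lamD (ew p.2 _)); ring.
Qed.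

Lemma gen_sq v : gen v * gen v = 1.
Proof.
apply: Sop_ext => f [[y1 y2] s] /=.
rewrite /wop /= !addr0 mulrA -lamD /pR /= negbK.
have -> : v.1 - (v.1 - y1) = y1 by ring.
have -> : v.2 - (v.2 - y2) = y2 by ring.
rewrite (_ : _ + _ = 0) ?lamz0 ?mul1r //; rewrite /eR /=; ring.
Qed.

Lemma gen_prod : lam != 0 -> gen (1, 1) * gen (1, 0) * gen (0, 0) * gen (0, 1) = lam%:A.
Proof.
move=> lamn0; apply: Sop_ext => f [[y1 y2] s] /=.
rewrite /wop /= !addr0 /pR /= !negbK.
have -> : 0 - (0 - (1 - (1 - y1))) = y1 by ring.
have -> : 1 - (0 - (0 - (1 - y2))) = y2 by ring.
rewrite !mulrA -!lamD; congr (_ * _).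
rewrite /lamz (negbTE lamn0) -[RHS]expr1z; congr (_ ^ _); rewrite /eR /=; ring.
Qed.

Lemma tau1 a s1 s2 : tau a s1 s2 1 = a.
Proof. by rewrite /tau /= /phiF /=. Qed.

Lemma tau_gen a s1 s2 v : tau a s1 s2 (gen v) = s1 ^ v.1 * s2 ^ v.2.
Proof.
rewrite /tau /= /wop /= addr0 /phiF /pR /= !subr0 mulrA -lamD.
rewrite (_ : _ + _ = 0) ?lamz0 ?mul1r //; rewrite /eR /=; ring.
Qed.

Lemma tauD a s1 s2 x y : tau a s1 s2 (x + y) = tau a s1 s2 x + tau a s1 s2 y.
Proof. by []. Qed.
Lemma tauZ a s1 s2 c x : tau a s1 s2 (c *: x) = c * tau a s1 s2 x.
Proof. by []. Qed.

End OpAlg.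

Section Gen.
Variable R : realType.
Local Notation C := R[i].
Variable B : algType C.
Variable tau : B -> C.
Hypothesis tD : forall x y, tau (x + y) = tau x + tau y.
Hypothesis tZ : forall c x, tau (c *: x) = c * tau x.

Lemma t0 : tau 0 = 0.
Proof. by rewrite -(scale0r (0 : B)) tZ mul0r. Qed.
Lemma tN x : tau (- x) = - tau x.
Proof. by rewrite -scaleN1r tZ mulN1r. Qed.

Lemma key1 (v al : B) (k : C) : v * v = 1 -> (forall y, tau (v * y * v) = tau y) ->
  (v - 1%:A) * (al + (-k)%:A) + (al - k%:A) * (v + 1%:A) = 0 -> tau (al * v) = k * tau v.
Proof.
move=> vv inv E.
have sym : tau (v * al) = tau (al * v) by rewrite -[RHS]inv !mulrA -(mulrA _ v v) vv mulr1.
move: E; rewrite ?(mulrDr, mulrDl, mulrBr, mulrBl, mulNr, mulrN) ?(mulr_algl, mulr_algr).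
move=> /(congr1 tau); rewrite ?(tD, tN, tZ) t0 sym => E.
have : (2%:R : C) * (tau (al * v) - k * tau v) = 0 by rewrite -[RHS]E; ring.
by move/eqP; rewrite mulf_eq0 pnatr_eq0 /= subr_eq0 => /eqP.
Qed.

Lemma key2 (v0 v1 w0 w1 a0 a1 b0 b1 : B) (k0 k1 u0 u1 lam d : C) :
  v0 * v0 = 1 -> v1 * v1 = 1 -> w0 * w0 = 1 -> w1 * w1 = 1 ->
  (forall y, tau (v1 * y * v1) = tau y) -> (forall y, tau (w0 * y * w0) = tau y) ->
  (forall y, tau (w1 * y * w1) = tau y) ->
  w1 * v1 * v0 * w0 = lam%:A ->
  tau (a0 * v0) = k0 * tau v0 -> tau (a1 * v1) = k1 * tau v1 ->
  tau (b0 * w0) = u0 * tau w0 -> tau (b1 * w1) = u1 * tau w1 ->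
  w1 * v1 * v0 * b0 + (w1 * v1 * a0 + (w1 * a1 + b1 * v1) * v0) * w0 = d%:A ->
  lam * (k0 * tau v0 + k1 * tau v1 + u0 * tau w0 + u1 * tau w1) = d * tau 1.
Proof.
move=> v0v0 v1v1 w0w0 w1w1 iv1 iw0 iw1 hP ha0 ha1 hb0 hb1 E.
have P1 : v1 * v0 * w0 = lam *: w1.
  by have := congr1 (fun z => w1 * z) hP; rewrite !mulrA w1w1 mul1r mulr_algr.
have P2 : w1 * v1 * v0 = lam *: w0.
  by have := congr1 (fun z => z * w0) hP; rewrite -mulrA w0w0 mulr1 mulr_algl.
have P3 : v0 * w0 = lam *: (v1 * w1).
  by have := congr1 (fun z => v1 * z) P1; rewrite !mulrA v1v1 mul1r -scalerAr.
have e4 : w1 * v1 * v0 * b0 = lam *: (w0 * b0) by rewrite P2 -scalerAl.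
have e3 : w1 * v1 * a0 * w0 = lam *: (w1 * (v1 * (a0 * v0) * v1) * w1).
  have -> : w0 = v0 * (v0 * w0) by rewrite mulrA v0v0 mul1r.
  by rewrite P3 -!scalerAr !mulrA.
have e2 : w1 * a1 * v0 * w0 = lam *: (w1 * (a1 * v1) * w1).
  by rewrite -mulrA P3 -!scalerAr !mulrA.
have e1 : b1 * v1 * v0 * w0 = lam *: (b1 * w1).
  by rewrite -(mulrA b1) -(mulrA b1) P1 -scalerAr.
have sw0 : tau (w0 * b0) = tau (b0 * w0).
  by rewrite -[RHS]iw0 !mulrA -(mulrA _ w0 w0) w0w0 mulr1.
move: E; rewrite !mulrDl e4 e3 e2 e1 => /(congr1 tau).
rewrite !tD !tZ iw1 iv1 iw1 sw0 ha0 ha1 hb0 hb1 => <-; ring.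
Qed.

End Gen.

Lemma alg_hom_facts (R : realType) (A B : algType R[i]) (f : A -> B) : alg_hom f ->
  [/\ forall x y, f (x + y) = f x + f y, forall x y, f (x * y) = f x * f y,
      forall x, f (- x) = - f x, forall c : R[i], f (c%:A) = c%:A & f 0 = 0].
Proof.
case=> fD fM f1 fZ; split => //.
- by move=> x; rewrite -scaleN1r fZ scaleN1r.
- by move=> c; rewrite fZ f1.
by rewrite -(scale0r (1 : A)) fZ scale0r.
Qed.

Lemma main_eq (R : realType) (s k0' k1' u0' u1' d : R[i])
  (H0 : algType R[i]) (V0 V1 W0 W1 : H0) (a0 a1 b0 b1 : H0) :
  s != 0 -> presents_H1 s V0 V1 W0 W1 ->
  (V0 - 1%:A) * (a0 + (-k0')%:A) + (a0 - k0'%:A) * (V0 + 1%:A) = 0 ->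
  (V1 - 1%:A) * (a1 + (-k1')%:A) + (a1 - k1'%:A) * (V1 + 1%:A) = 0 ->
  (W0 - 1%:A) * (b0 + (-u0')%:A) + (b0 - u0'%:A) * (W0 + 1%:A) = 0 ->
  (W1 - 1%:A) * (b1 + (-u1')%:A) + (b1 - u1'%:A) * (W1 + 1%:A) = 0 ->
  W1 * V1 * V0 * b0 + (W1 * V1 * a0 + (W1 * a1 + b1 * V1) * V0) * W0 = d%:A ->
  forall a s1 s2 : R[i], s1 * s1 = 1 -> s2 * s2 = 1 ->
  s^-1 * (k0' + k1' * s1 + u0' * s2 + u1' * (s1 * s2)) = d * a.
Proof.
move=> sn0 [_ HU] E0 E1 E2 E3 E4 a s1 s2 h1 h2.
set lam := s^-1.
have lam0 : lam != 0 by rewrite invr_eq0.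
pose g00 : Sop R lam := gen R lam (0, 0).
pose g10 : Sop R lam := gen R lam (1, 0).
pose g01 : Sop R lam := gen R lam (0, 1).
pose g11 : Sop R lam := gen R lam (1, 1).
have rel g : g * g = 1 -> (g - 1) * (g + 1) = 0 :> Sop R lam.
  move=> gg; rewrite mulrDr mulr1 !mulrBl !mul1r gg.
  by rewrite addrA subrK subrr.
have HR : HRel1 s g00 g10 g01 g11.
  by split; rewrite ?rel ?gen_sq //; exact: gen_prod.
have [[f [hf [fV0 fV1 fW0 fW1]]] _] := HU _ _ _ _ _ HR.
have [fD fM fN fA f0] := @alg_hom_facts _ _ _ _ hf.
pose tt := tau R lam a s1 s2 : Sop R lam -> R[i].
have tD : forall x y, tt (x + y) = tt x + tt y by [].
have tZ : forall c x, tt (c *: x) = c * tt x by [].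
have inv v : forall y, tt (gen R lam v * y * gen R lam v) = tt y by exact: tau_inv.
have map E : E = 0 -> f E = 0 by move=> ->.
move: (map _ E0) (map _ E1) (map _ E2) (map _ E3) (congr1 f E4).
rewrite !(fD, fM, fN, fA, f0) fV0 fV1 fW0 fW1 => F0 F1 F2 F3 F4.
have K0 := @key1 _ _ tt tD tZ _ _ _ (gen_sq _ _ _) (inv _) F0.
have K1 := @key1 _ _ tt tD tZ _ _ _ (gen_sq _ _ _) (inv _) F1.
have K2 := @key1 _ _ tt tD tZ _ _ _ (gen_sq _ _ _) (inv _) F2.
have K3 := @key1 _ _ tt tD tZ _ _ _ (gen_sq _ _ _) (inv _) F3.
have := @key2 _ _ tt tD tZ _ _ _ _ _ _ _ _ _ _ _ _ _ _ (gen_sq _ _ _) (gen_sq _ _ _) (gen_sq _ _ _) (gen_sq _ _ _) (inv _) (inv _) (inv _)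
  (gen_prod _ _ lam0) K0 K1 K2 K3 F4.
rewrite /tt !tau_gen tau1 /= !expr0z !expr1z !mulr1 !mul1r => <-.
by [].
Qed.

Theorem lemma5p5 (R : realType) (q s k0' k1' u0' u1' q' : R[i]) :
  q != 0 -> s ^+ 2 = q ->
  ~~ [&& k0' == 0, k1' == 0, u0' == 0, u1' == 0 & q' == 0] ->
  forall (H0 : algType R[i]) (V0 V1 W0 W1 : H0),
  presents_H1 s V0 V1 W0 W1 ->
  forall (A : algType R[i]) (e X0 X1 Y0 Y1 : A),
  presents_Heps q s k0' k1' u0' u1' q' e X0 X1 Y0 Y1 ->
  ~ exists phi : A -> H0 * H0,
      [/\ dual_hom e phi, bijective phi &
          [/\ (phi X0).1 = V0, (phi X1).1 = V1,
              (phi Y0).1 = W0 & (phi Y1).1 = W1]].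
Proof.
move=> q0 hs hv H0 V0 V1 W0 W1 HP A e X0 X1 Y0 Y1 [_ _ HRE _].
move=> [phi [[phiD phiM phi1 phiZ phiE] _ [p0 p1 p2 p3]]].
have s0 : s != 0.
  by apply: contraNneq q0 => s0; rewrite -hs s0 expr0n.
have phi0 : phi 0 = (0, 0).
  by rewrite -(scale0r (0 : A)) phiZ /dscale !scale0r.
have phiN x : phi (- x) = (- (phi x).1, - (phi x).2).
  by rewrite -scaleN1r phiZ /dscale !scaleN1r.
have phiA a : phi (a%:A) = (a%:A, 0).
  by rewrite phiZ phi1 /dscale /= scaler0.
have phiEz b : phi (b *: e) = (0, b%:A).
  by rewrite phiZ phiE /dscale /= scaler0.
have ex0 : phi X0 = (V0, (phi X0).2) by rewrite -p0; case: (phi X0).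
have ex1 : phi X1 = (V1, (phi X1).2) by rewrite -p1; case: (phi X1).
have ex2 : phi Y0 = (W0, (phi Y0).2) by rewrite -p2; case: (phi Y0).
have ex3 : phi Y1 = (W1, (phi Y1).2) by rewrite -p3; case: (phi Y1).
case: HRE => R0 R1 R2 R3 R4.
rewrite /dual_el in R0 R1 R2 R3 R4.
move: (congr1 (fun x => (phi x).2) R0) (congr1 (fun x => (phi x).2) R1)
      (congr1 (fun x => (phi x).2) R2) (congr1 (fun x => (phi x).2) R3)
      (congr1 (fun x => (phi x).2) R4).
rewrite /= !(phiM, phiD, phiN, phiA, phiEz) phi0 ex0 ex1 ex2 ex3 /= !addr0 !add0r => E0 E1 E2 E3 E4.
set d := - (s^-1 * q' / (2%:R * q)).
have M := @main_eq _ _ _ _ _ _ _ _ _ _ _ _ _ _ _ _ s0 HP E0 E1 E2 E3 E4.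
have lam0 : s^-1 != 0 by rewrite invr_eq0.
have Z s1 s2 : s1 * s1 = 1 -> s2 * s2 = 1 ->
    k0' + k1' * s1 + u0' * s2 + u1' * (s1 * s2) = 0.
  move=> h1 h2; have := M 0 s1 s2 h1 h2; rewrite mulr0 => /eqP.
  by rewrite mulf_eq0 (negbTE lam0) /= => /eqP.
have o : (1 : R[i]) * 1 = 1 by rewrite mulr1.
have m : (-1 : R[i]) * -1 = 1 by rewrite mulrNN mulr1.
have z1 := Z _ _ o o; have z2 := Z _ _ m o; have z3 := Z _ _ o m; have z4 := Z _ _ m m.
have four : (4%:R : R[i]) != 0 by rewrite pnatr_eq0.
have solve (x : R[i]) : 4%:R * x = 0 -> x = 0.
  by move/eqP; rewrite mulf_eq0 (negbTE four) /= => /eqP.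
have hk0 : k0' = 0.
  apply: solve; rewrite -[RHS](_ : 0 + 0 + 0 + 0 = 0); last by rewrite !(subr0, addr0).
  by rewrite -{1}z1 -{1}z2 -{1}z3 -z4; ring.
have hk1 : k1' = 0.
  apply: solve; rewrite -[RHS](_ : 0 - 0 + 0 - 0 = 0); last by rewrite !(subr0, addr0).
  by rewrite -{1}z1 -{1}z2 -{1}z3 -z4; ring.
have hu0 : u0' = 0.
  apply: solve; rewrite -[RHS](_ : 0 + 0 - 0 - 0 = 0); last by rewrite !(subr0, addr0).
  by rewrite -{1}z1 -{1}z2 -{1}z3 -z4; ring.
have hu1 : u1' = 0.
  apply: solve; rewrite -[RHS](_ : 0 - 0 - 0 + 0 = 0); last by rewrite !(subr0, addr0).
  by rewrite -{1}z1 -{1}z2 -{1}z3 -z4; ring.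
have hq : q' = 0.
  have := M 1 1 1 o o; rewrite z1 mulr0 mulr1 => /esym/eqP.
  rewrite /d oppr_eq0 !mulf_eq0 !invr_eq0 mulf_eq0 (negbTE s0) (negbTE q0) pnatr_eq0 /=.
  by rewrite orbF => /eqP.
by move: hv; rewrite hk0 hk1 hu0 hu1 hq !eqxx.
Qed.
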